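(* If a connected graph $G$ belongs to $\mathfrak{F}$, then $G\in\mathcal{P}$. That is, $\mathfrak{F}\subset\mathcal{P}$.
   Context: Graphs are finite, simple and undirected. $\mathbb{T}=\{z\in\mathbb{C}:|z|=1\}$, $\mathbb{I}=[0,2\pi)$. A $\mathbb{T}$-gain on $G$ is a map $\varphi$ from oriented edges to $\mathbb{T}$ with $\varphi(\overrightarrow{e_{ts}})=\varphi(\overrightarrow{e_{st}})^{-1}$; $A(\Phi)$ for $\Phi=(G,\varphi)$ is the Hermitian matrix with $(s,t)$ entry $\varphi(\overrightarrow{e_{st}})$ if $v_s\sim v_t$, else $0$; $\mathcal{T}_G$ is the set of all $\mathbb{T}$-gain graphs on $G$. $\Re(A)\ge0$ means the real part of every entry of $A$ is nonnegative. The gain of a directed cycle is the product of gains of its oriented edges. A rooted spanning tree $T$ with root $v_r$ induces the tree order ($v_x\le v_y$ iff $v_x$ is on the $T$-path from $v_r$ to $v_y$); $T$ is normal if adjacent vertices of $G$ are always comparable. The suitably oriented graph $\overrightarrow{G_T}$ orients each edge $e_{st}$ with $v_s\le v_t$ as $\overrightarrow{e_{st}}$ if $e_{st}\in E(T)$ and as $\overrightarrow{e_{ts}}$ otherwise; the $m-n+1$ fundamental cycles $C_j$ of $T$ (the unique cycle in $T$ plus a non-tree edge) become directed cycles $\overrightarrow{C_j(T)}$. For $r=(c_1,\dots,c_{m-n+1})\in\mathbb{I}^{m-n+1}$, $\mathcal{A}_T(r)=\{(G,\varphi)\in\mathcal{T}_G:\varphi(\overrightarrow{C_j(T)})=e^{ic_j}\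 \forall j\}$. $G$ has property GNRP (w.r.t. normal spanning tree $T$) if for each $r$ there is $\Phi\in\mathcal{A}_T(r)$ with $\Re(A(\Phi))\ge0$; $\mathcal{P}$ is the class of connected graphs with GNRP. The sum $G_1+G_2$ of subgraphs is the subgraph consisting of all edges in $G_1$ or $G_2$. A fundamental subgraph of $G$ w.r.t. $T$ is the sum $C_1+\cdots+C_s$ of a maximal collection of fundamental cycles such that the intersection of $C_1+\cdots+C_s$ with $T$ is a subtree. A fundamental subgraph built from fundamental cycles $C_1,\dots,C_s$ has the distinguished edge property (DEP) if these cycles can be ordered $C_{k_1},\dots,C_{k_s}$ so that $|E(C_{k_i})\setminus E(C_{k_1}+\cdots+C_{k_{i-1}})|>1$ for all $i=2,\dots,s$. A connected graph $G$ has DEP if every fundamental subgraph of $G$ with respect to a normal spanning tree $T$ has DEP; $\mathfrak{F}$ is the collection of connected graphs with DEP. *)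

(* Defs.v *)
From HB Require Import structures.
From mathcomp Require Import all_boot all_order all_algebra.
From mathcomp Require Import boolp reals trigo.
From mathcomp Require Import complex.
Set Implicit Arguments. Unset Strict Implicit. Unset Printing Implicit Defensive.
Import Order.TTheory GRing.Theory Num.Theory.
Local Open Scope ring_scope.

Definition simple_graph (T : finType) (e : rel T) : Prop :=
  symmetric e /\ irreflexive e.

Definition graph_connected (T : finType) (e : rel T) : Prop :=
  forall x y : T, connect e x y.

Definition spanning_tree (T : finType) (e tr : rel T) : Prop :=
  [/\ symmetric tr, subrel tr e, (forall x y : T, connect tr x y)
    & forall c : seq T, (2 < size c)%N -> uniq c -> ~~ cycle tr c].

Definition tree_path (T : finType) (tr : rel T) (s t : T) (q : seq T) : bool :=
  [&& path tr s q, last s q == t & uniq (s :: q)].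

Definition tree_le (T : finType) (tr : rel T) (rt x y : T) : Prop :=
  exists q : seq T, tree_path tr rt y q /\ x \in rt :: q.

Definition normal_tree (T : finType) (e tr : rel T) (rt : T) : Prop :=
  forall x y : T, e x y -> tree_le tr rt x y \/ tree_le tr rt y x.

(* Fundamental cycles are indexed by the non-tree edges {s,t}, written as the
   pair (s,t) with s <= t in the tree order. *)
Definition fc_key (T : finType) (e tr : rel T) (rt : T) (k : T * T) : Prop :=
  [/\ e k.1 k.2, ~~ tr k.1 k.2 & tree_le tr rt k.1 k.2].

Definition fc_keys (T : finType) (e tr : rel T) (rt : T) : {set T * T} :=
  [set k | `[< fc_key e tr rt k >]].

(* Edge set of the fundamental cycle of key (s,t), with every edge stored in
   its orientation in the suitably oriented graph: tree edges (a,b) with a <= b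
   (these are the consecutive pairs of the tree path from s down to t), and the
   non-tree edge oriented as (t,s). *)
Definition fc_edges (T : finType) (tr : rel T) (k : T * T) : {set T * T} :=
  [set ab | `[< exists q, tree_path tr k.1 k.2 q /\ ab \in zip (k.1 :: q) q >]]
  :|: [set (k.2, k.1)].

Definition fc_sum (T : finType) (tr : rel T) (S : {set T * T}) : {set T * T} :=
  \bigcup_(k in S) fc_edges tr k.

Definition edges_connected (T : finType) (F : {set T * T}) : Prop :=
  forall x y : T,
    (exists z, ((x, z) \in F) || ((z, x) \in F)) ->
    (exists z, ((y, z) \in F) || ((z, y) \in F)) ->
    connect (fun a b => ((a, b) \in F) || ((b, a) \in F)) x y.

Definition tree_edges (T : finType) (tr : rel T) : {set T * T} :=
  [set ab | tr ab.1 ab.2].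

Definition subtree_collection (T : finType) (e tr : rel T) (rt : T)
    (S : {set T * T}) : Prop :=
  S \subset fc_keys e tr rt /\ edges_connected (fc_sum tr S :&: tree_edges tr).

Definition fundamental_collection (T : finType) (e tr : rel T) (rt : T)
    (S : {set T * T}) : Prop :=
  subtree_collection e tr rt S /\
  forall S' : {set T * T}, subtree_collection e tr rt S' -> S \subset S' -> S' = S.

Definition collection_DEP (T : finType) (tr : rel T) (S : {set T * T}) : Prop :=
  exists ks : seq (T * T),
    [/\ uniq ks, [set k in ks] = S &
        forall (pre post : seq (T * T)) (k : T * T),
          ks = pre ++ k :: post -> pre != [::] ->
          (1 < #|fc_edges tr k :\: \bigcup_(k' <- pre) fc_edges tr k'|)%N].

Definition graph_DEP (T : finType) (e tr : rel T) (rt : T) : Prop :=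
  forall S : {set T * T}, fundamental_collection e tr rt S -> collection_DEP tr S.

Definition gain_graph (R : rcfType) (T : finType) (e : rel T)
    (phi : T -> T -> R[i]) : Prop :=
  forall x y : T, e x y -> `|phi x y| = 1 /\ phi y x = (phi x y)^-1.

(* Re(A(Phi)) >= 0: entries are phi x y on edges and 0 elsewhere. *)
Definition Re_adj_nonneg (R : rcfType) (T : finType) (e : rel T)
    (phi : T -> T -> R[i]) : Prop :=
  forall x y : T, e x y -> 0 <= complex.Re (phi x y).

Definition fc_gain_is (R : rcfType) (T : finType) (tr : rel T)
    (phi : T -> T -> R[i]) (k : T * T) (z : R[i]) : Prop :=
  forall q : seq T, tree_path tr k.1 k.2 q ->
    (\prod_(ab <- zip (k.1 :: q) q) phi ab.1 ab.2) * phi k.2 k.1 = z.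

Definition expi (R : realType) (c : R) : R[i] := (cos c +i* sin c)%C.

Definition graph_GNRP (R : realType) (T : finType) (e tr : rel T) (rt : T) : Prop :=
  forall r : T * T -> R,
    (forall k, k \in fc_keys e tr rt -> 0 <= r k < 2 * pi) ->
    exists phi : T -> T -> R[i],
      [/\ gain_graph e phi,
          (forall k, k \in fc_keys e tr rt -> fc_gain_is tr phi k (expi (r k)))
        & Re_adj_nonneg e phi].

(* Main.v *)
Require Import Defs.
From HB Require Import structures.
From mathcomp Require Import all_boot all_order all_algebra.
From mathcomp Require Import boolp reals trigo.
From mathcomp Require Import complex.
From mathcomp Require Import zify.
Set Implicit Arguments. Unset Strict Implicit. Unset Printing Implicit Defensive.
Import Order.TTheory GRing.Theory Num.Theory.

Lemma ar1 a b c d n : (0 < b -> 0 < d -> a + b.+1 + (c + d.+1) < n.+1 -> a.+1 + c.+1 < n)%N.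
Proof. lia. Qed.
Lemma ar2 a b c d n : (a + b.+1 + (c + d.+1) < n.+1 -> b + d < n)%N.
Proof. lia. Qed.

Lemma ar3 a b : ((0 < a) || (0 < b) -> 2 < (a + b.+1).+1)%N.
Proof. lia. Qed.

Section Tree.
Variables (T : finType) (tr : rel T).
Hypotheses (trS : symmetric tr)
  (trA : forall c : seq T, (2 < size c)%N -> uniq c -> ~~ cycle tr c).

Lemma tp_exists s t : connect tr s t -> exists q, tree_path tr s t q.
Proof.
case/connectP=> p hp ->; case: (shortenP hp) => p' hp' hu _.
by exists p'; rewrite /tree_path hp' hu eqxx.
Qed.

Lemma tp_split s t A x B : tree_path tr s t (A ++ x :: B) ->
  tree_path tr s x (rcons A x) /\ tree_path tr x t B.
Proof.
case/and3P=> + + hu; rewrite cat_path last_cat /= => /andP[pA /andP[ex pB]] /eqP lt.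
have hu' : uniq ((s :: rcons A x) ++ B) by rewrite cat_cons cat_rcons.
have hu2 : uniq (x :: B) by move: hu; rewrite -cat_cons cat_uniq => /and3P[_ _].
move: hu'; rewrite cat_uniq => /and3P[hu1 _ _]; split.
  by rewrite /tree_path rcons_path pA ex last_rcons eqxx /=.
by rewrite /tree_path pB lt eqxx /=.
Qed.

Lemma tp_nilr s q : tree_path tr s s q -> q = [::].
Proof.
case/and3P=> _ hl hu; case/lastP: q hl hu => // Y y.
rewrite last_rcons => /eqP -> /=; rewrite mem_rcons inE eqxx //.
Qed.

Lemma tp_nill s t : tree_path tr s t [::] -> s = t.
Proof. by case/and3P=> _ /eqP. Qed.

Lemma tp_uniq_n n : forall s t q1 q2, (size q1 + size q2 < n)%N ->
  tree_path tr s t q1 -> tree_path tr s t q2 -> q1 = q2.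
Proof.
elim: n => [|n IH] s t q1 q2 hn h1 h2; first by [].
case: (boolP (has (fun x => (x \in q2) && (x != t)) q1)).
  case/hasP=> x hx1 /andP[hx2 xt].
  have [A1 [B1 E1]] : exists A B, q1 = A ++ x :: B.
    by case/splitPr: hx1 => A B; exists A, B.
  have [A2 [B2 E2]] : exists A B, q2 = A ++ x :: B.
    by case/splitPr: hx2 => A B; exists A, B.
  subst q1 q2.
  case: (tp_split h1) => ha1 hb1; case: (tp_split h2) => ha2 hb2.
  have nB1 : B1 != [::].
    by apply/eqP=> E; move: hb1; rewrite E => /tp_nill; move/eqP: xt.
  have nB2 : B2 != [::].
    by apply/eqP=> E; move: hb2; rewrite E => /tp_nill; move/eqP: xt.
  move: hn; rewrite !size_cat /= => hn.
  have eA : rcons A1 x = rcons A2 x.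
    apply: (IH s x) => //; rewrite !size_rcons.
    have sB1 : (0 < size B1)%N by rewrite lt0n size_eq0.
    have sB2 : (0 < size B2)%N by rewrite lt0n size_eq0.
    exact: ar1 sB1 sB2 hn.
  have eB : B1 = B2.
    apply: (IH x t) => //.
    have sA1 : (0 < size (rcons A1 x))%N by rewrite size_rcons.
    by move: hn; rewrite size_rcons in sA1 *; apply: ar2.
  by rewrite -cat_rcons eA eB cat_rcons.
move/hasPn=> hno.
case/lastP: q1 h1 hn hno => [|X a] h1 hn hno.
  have st := tp_nill h1; subst t; by rewrite (tp_nilr h2).
case/lastP: q2 h2 hn hno => [|Y b] h2 hn hno.
  have st := tp_nill h2; subst t; by have := tp_nilr h1; case: X {h1 hn hno}.
have at' : a = t by case/and3P: h1; rewrite last_rcons => _ /eqP.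
have bt : b = t by case/and3P: h2; rewrite last_rcons => _ /eqP.
subst a b.
case: (boolP ((X == [::]) && (Y == [::]))).
  by case/andP=> /eqP -> /eqP ->.
move=> nXY; exfalso.
have := trA (c := s :: (X ++ t :: rev Y)).
move: h1 h2 => /and3P[p1 _ u1] /and3P[p2 _ u2].
have XY : forall x, x \in X -> x \notin Y.
  move=> x xX; apply/negP=> xY.
  have := hno x; rewrite mem_rcons inE xX orbT => /(_ isT).
  rewrite mem_rcons inE xY orbT /=.
  move: u1; rewrite /= rcons_uniq mem_rcons inE => /andP[_ /andP[tX _]].
  by rewrite negbK => /eqP xt; move: tX; rewrite -xt xX.
have -> : (2 < size (s :: (X ++ t :: rev Y)))%N.
  move: nXY; rewrite /= size_cat /= size_rev -!size_eq0 negb_and -!lt0n.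
  exact: ar3.
have -> : uniq (s :: (X ++ t :: rev Y)).
  move: u1 u2; rewrite /= !rcons_uniq !mem_rcons !inE mem_cat inE mem_rev cat_uniq /= rev_uniq mem_rev.
  move=> /andP[/norP[st sX] /andP[tX uX]] /andP[/norP[_ sY] /andP[tY uY]].
rewrite !negb_or sX st sY tX tY uX uY /= andbT.
  apply/hasPn=> y; rewrite mem_rev => yY; apply/negP=> yX.
  by move: (XY y yX); rewrite yY.
rewrite /= rcons_cat /= => /(_ isT isT); apply/negP; apply/negPn.
move: p1; rewrite cat_path rcons_path => /andP[-> /= ->] /=.
have := rev_path tr s (rcons Y t); rewrite last_rcons belast_rcons rev_cons.
rewrite /= => ->.
by rewrite (eq_path (e' := tr)) // => x y; rewrite trS.
Qed.

Lemma tp_uniq s t q1 q2 : tree_path tr s t q1 -> tree_path tr s t q2 -> q1 = q2.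
Proof. exact: (@tp_uniq_n (size q1 + size q2).+1). Qed.


Lemma zip_cons_nth (d x : T) (q : seq T) (a b : T) : (a, b) \in zip (x :: q) q ->
  exists2 i, (i < size q)%N & a = nth d (x :: q) i /\ b = nth d (x :: q) i.+1.
Proof.
have sz : size (zip (x :: q) q) = size q by rewrite size2_zip //= leqnSn.
case/(nthP (d, d)) => i; rewrite sz => iq.
rewrite nth_zip_cond sz iq /= => -[<- <-].
by exists i.
Qed.

Lemma tp_take rt y p i : tree_path tr rt y p -> (i <= size p)%N ->
  tree_path tr rt (nth rt (rt :: p) i) (take i p).
Proof.
case/and3P=> pp _ up ip; rewrite /tree_path take_path //=.
rewrite (last_nth rt) size_takel // -/(take i.+1 (rt :: p)) nth_take // eqxx /=.
by move: (take_uniq i.+1 up) => /=.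
Qed.

Variable (trC : forall x y, connect tr x y) (rt : T).

Definition tpath s t := xchoose (tp_exists (trC s t)).
Lemma tpathP s t : tree_path tr s t (tpath s t).
Proof. exact: xchooseP. Qed.

Definition dep x := size (tpath rt x).

Lemma dep_nth p y i : tree_path tr rt y p -> (i <= size p)%N ->
  dep (nth rt (rt :: p) i) = i.
Proof.
move=> hp ip; rewrite /dep (tp_uniq (tpathP _ _) (tp_take hp ip)).
exact: size_takel.
Qed.

Lemma dep_path p y : tree_path tr rt y p -> dep y = size p.
Proof.
move=> hp; have := dep_nth hp (leqnn _); rewrite -last_nth.
by case/and3P: hp => _ /eqP ->.
Qed.

Lemma tree_le_dep x y : tree_le tr rt x y -> x != y -> (dep x < dep y)%N.
Proof.
case=> p [hp xp] xy; rewrite (dep_path hp).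
have := dep_nth hp (i := index x (rt :: p)); rewrite nth_index // => -> //.
  rewrite ltn_neqAle -ltnS -[(size p).+1]/(size (rt :: p)) index_mem xp andbT.
  apply: contra xy => /eqP ei.
  have := nth_index rt xp; rewrite ei -last_nth => <-.
  by case/and3P: hp => _ /eqP ->.
by rewrite -ltnS -[(size p).+1]/(size (rt :: p)) index_mem.
Qed.

Lemma tree_le_down x y q a b : tree_le tr rt x y -> tree_path tr x y q ->
  (a, b) \in zip (x :: q) q -> dep b = (dep a).+1.
Proof.
case=> p [hp xp] hq hab.
have [A [B E]] : exists A B, rt :: p = A ++ x :: B.
  by case/splitPr: xp => A B; exists A, B.
have EB : B = q.
  apply: (tp_uniq _ hq); case: A E => [|r A] /= E.
    have ex : rt = x := congr1 (head rt) E.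
    have eB : p = B := congr1 behead E.
    by rewrite -ex -eB.
  have eB : p = A ++ x :: B := congr1 behead E.
  by move: hp; rewrite eB => /tp_split [].
subst B.
case: (zip_cons_nth rt hab) => i iq [-> ->].
have sp : size p = (size A + size q)%N.
  by have := congr1 size E; rewrite size_cat /= addnS => -[].
have h1 : nth rt (x :: q) i = nth rt (rt :: p) (size A + i).
  by rewrite E nth_cat ltnNge leq_addr /= addKn.
have h2 : nth rt (x :: q) i.+1 = nth rt (rt :: p) (size A + i).+1.
  by rewrite E nth_cat ltnNge -addnS leq_addr /= addKn.
rewrite h1 h2 !(dep_nth hp) //; rewrite sp; move: iq; clear; lia.
Qed.

End Tree.
Section Cx.
Local Open Scope ring_scope.
Variable R : rcfType.
Definition Ugood (w : R[i]) := `|w| = 1 /\ 0 <= complex.Re w.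

Lemma Ugood_inv w : Ugood w -> Ugood w^-1.
Proof.
case=> h1 h2; split; first by rewrite normfV h1 invr1.
case: w h1 h2 => a b /= _ ha.
by rewrite mulr_ge0 // invr_ge0 addr_ge0 // sqr_ge0.
Qed.

Lemma Ugood1 : Ugood 1.
Proof. by split; rewrite ?normr1 //=. Qed.

Lemma Ugood_sqrt u : `|u| = 1 -> exists w, Ugood w /\ w * w = u.
Proof.
move=> hu; exists (sqrtc u); split; last by rewrite -expr2 sqr_sqrtc.
split; last by case: u hu => a b _ /=; rewrite sqrtr_ge0.
have h : `|sqrtc u| ^+ 2 = 1 by rewrite -normrX sqr_sqrtc hu.
by apply/eqP; rewrite -(sqrp_eq1 (normr_ge0 _)) h.
Qed.

Variables (K P : eqType) (Z : K -> seq P) (k0 : K).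
Hypothesis Zu : forall k, uniq (Z k).

Definition goodL (L : seq K) := forall i, (i < size L)%N ->
  exists2 d, d \in Z (nth k0 L i) & forall j, (j < i)%N -> d \notin Z (nth k0 L j).

Lemma greedy (z : K -> R[i]) L : goodL L -> (forall k, `|z k| = 1) ->
  exists g : P -> R[i], exists h : K -> R[i],
   [/\ forall p, Ugood (g p), forall k, Ugood (h k) &
       forall k, k \in L -> (\prod_(p <- Z k) g p) * h k = z k].
Proof.
move=> + zn; elim/last_ind: L => [_|L k IH gL].
  by exists (fun _ => 1), (fun _ => 1); split => // *; exact: Ugood1.
have gL' : goodL L.
  move=> i iL; have iL' : (i < size (rcons L k))%N by rewrite size_rcons ltnW.
  case: (gL i iL') => d; rewrite nth_rcons iL => hd hj; exists d => // j ji.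
  by have := hj j ji; rewrite nth_rcons (ltn_trans ji iL).
case: (IH gL') => g [h [gU hU gh]].
case: (gL (size L)); first by rewrite size_rcons.
rewrite nth_rcons ltnn eqxx => d dk hd.
have dL : forall k', k' \in L -> d \notin Z k'.
  move=> k' /(nthP k0) [j jL <-]; by have := hd j jL; rewrite nth_rcons jL.
have kL : k \notin L by apply: contraL dk => /dL.
set S := \prod_(p <- Z k | p != d) g p.
have nS : `|S| = 1.
  by rewrite /S normr_prod big1 // => p _; case: (gU p).
have S0 : S != 0 by rewrite -normr_eq0 nS oner_neq0.
have nu : `|z k / S| = 1 by rewrite normf_div nS zn divr1.
case: (Ugood_sqrt nu) => w [wU ww].
exists (fun p => if p == d then w else g p), (fun x => if x == k then w else h x).
split.
- by move=> p; case: ifP.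
- by move=> x; case: ifP.
move=> k'; rewrite mem_rcons inE; case: eqVneq => [-> _|nk /= k'L].
  rewrite (bigD1_seq d) //= eqxx.
  rewrite (eq_bigr (fun p => g p)); last by move=> p /negbTE ->.
  by rewrite -/S mulrAC ww mulrAC -mulrA divff // mulr1.
rewrite -(gh k' k'L); congr (_ * _).
by apply: eq_big_seq => p pk; case: eqVneq => // E; move: (dL k' k'L); rewrite -E pk.
Qed.

Lemma goodL_cat L1 L2 : goodL L1 -> goodL L2 ->
  (forall k1 k2 d, k1 \in L1 -> k2 \in L2 -> d \in Z k2 -> d \notin Z k1) ->
  goodL (L1 ++ L2).
Proof.
move=> g1 g2 dis i; rewrite size_cat => iL.
case: (ltnP i (size L1)) => i1.
  case: (g1 i i1) => d; rewrite nth_cat i1 => dk hd; exists d => // j ji.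
  by rewrite nth_cat (ltn_trans ji i1); apply: hd.
have i2 : (i - size L1 < size L2)%N by rewrite ltn_subLR.
case: (g2 _ i2) => d dk hd; exists d; first by rewrite nth_cat ltnNge i1.
move=> j ji; rewrite nth_cat; case: ifP => j1.
  by apply: (dis _ (nth k0 L2 (i - size L1))) => //; [exact: mem_nth | exact: mem_nth].
apply: hd; move/negbT: j1; rewrite -leqNgt => j1.
by rewrite ltn_sub2r // (leq_ltn_trans j1 ji).
Qed.
End Cx.

Section Main.
Variables (T : finType) (e tr : rel T) (rt : T).
Hypotheses (eS : symmetric e) (eI : irreflexive e) (trS : symmetric tr)
  (trE : subrel tr e) (trC : forall x y, connect tr x y)
  (trA : forall c : seq T, (2 < size c)%N -> uniq c -> ~~ cycle tr c)
  (nT : normal_tree e tr rt).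

Local Notation tp := (tpath trC).
Definition Zk (k : T * T) := zip (k.1 :: tp k.1 k.2) (tp k.1 k.2).
Local Notation keys := (fc_keys e tr rt).

Lemma zip_path (r : rel T) x q a b : path r x q -> (a, b) \in zip (x :: q) q -> r a b.
Proof.
elim: q x => // y q IH x /= /andP[rxy pq]; rewrite inE => /orP[/eqP [-> ->] // | h].
exact: IH h.
Qed.

Lemma zip_mem (x : T) q a b : (a, b) \in zip (x :: q) q -> (a \in x :: q) && (b \in x :: q).
Proof.
case/(zip_cons_nth x) => i iq [-> ->]; rewrite !mem_nth //=.
exact: ltnW.
Qed.

Lemma conn_path (r : rel T) x q v : (forall a b, (a, b) \in zip (x :: q) q -> r a b) ->
  v \in x :: q -> connect r x v.
Proof.
elim: q x => [|y q IH] x hz; first by rewrite inE => /eqP ->.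
rewrite inE => /orP[/eqP -> //| hv].
apply: (connect_trans (connect1 (hz x y _))); first by rewrite /= inE eqxx.
by apply: IH => // a b hab; apply: hz; rewrite /= inE hab orbT.
Qed.

Lemma fc_edgesE k ab : (ab \in fc_edges tr k) = (ab \in Zk k) || (ab == (k.2, k.1)).
Proof.
rewrite /fc_edges in_setU in_set1 in_set; congr orb.
apply/asboolP/idP => [[q [hq hab]]|hab].
  by rewrite /Zk -(tp_uniq trS trA hq (tpathP trC _ _)).
by exists (tp k.1 k.2); split => //; exact: tpathP.
Qed.

Lemma keyP k : reflect (fc_key e tr rt k) (k \in keys).
Proof. by rewrite /fc_keys in_set; apply: asboolP. Qed.

Lemma Zk_tree k ab : ab \in Zk k -> tr ab.1 ab.2.
Proof.
case: ab => a b; case/and3P: (tpathP trC k.1 k.2) => hp _ _.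
exact: zip_path hp.
Qed.

Lemma Zk_nonempty k : k \in keys -> exists ab, ab \in Zk k.
Proof.
case/keyP=> ek _ _; have := tpathP trC k.1 k.2; rewrite /Zk.
case: (tp k.1 k.2) => [|y q] hp.
  by move: ek; rewrite (tp_nill hp) eI.
by exists (k.1, y); rewrite /= inE eqxx.
Qed.

Lemma nt_notZ k k' : k \in keys -> (k.2, k.1) \notin Zk k'.
Proof.
case/keyP=> _ ntr _; apply/negP => /Zk_tree /=; rewrite trS.
by apply/negP.
Qed.

Definition Frel (F : {set T * T}) := fun a b => ((a, b) \in F) || ((b, a) \in F).

Lemma Frel_sym F : connect_sym (Frel F).
Proof. by apply: sym_connect_sym => a b; rewrite /Frel orbC. Qed.

Lemma ec_single k : k \in keys -> edges_connected (fc_sum tr [set k] :&: tree_edges tr).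
Proof.
move=> kK; rewrite /fc_sum big_set1; set F := _ :&: _.
have Fin : forall ab, ab \in F -> ab \in Zk k.
  move=> ab; rewrite in_setI fc_edgesE in_set => /andP[/orP[//|/eqP E]].
  by rewrite E /=; case/keyP: kK => _ ntr _; rewrite trS (negbTE ntr).
have inF : forall ab, ab \in Zk k -> ab \in F.
  by move=> ab h; rewrite in_setI fc_edgesE h in_set (Zk_tree h).
have cx : forall v, v \in k.1 :: tp k.1 k.2 -> connect (Frel F) k.1 v.
  move=> v; apply: conn_path => a b /inF h; by rewrite /Frel h.
have inc : forall x, (exists z, ((x, z) \in F) || ((z, x) \in F)) -> connect (Frel F) k.1 x.
  move=> x [z /orP[] /Fin /zip_mem /andP[h1 h2]]; exact: cx.
move=> x y hx hy; rewrite -/(connect (Frel F) x y).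
apply: (connect_trans _ (inc y hy)); rewrite Frel_sym; exact: inc.
Qed.

Lemma connect_mono (F1 F2 : {set T * T}) x y : F1 \subset F2 -> connect (Frel F1) x y -> connect (Frel F2) x y.
Proof.
move=> /subsetP sF; apply: connect_sub => a b; rewrite /Frel => /orP[h|h];
  apply: connect1; by rewrite /Frel (sF _ h) ?orbT.
Qed.

Lemma ec_union (F1 F2 : {set T * T}) d : edges_connected F1 -> edges_connected F2 ->
  d \in F1 -> d \in F2 -> edges_connected (F1 :|: F2).
Proof.
case: d => d1 d2 c1 c2 d1F d2F.
have key : forall x, (exists z, ((x, z) \in F1 :|: F2) || ((z, x) \in F1 :|: F2)) ->
    connect (Frel (F1 :|: F2)) x d1.
  move=> x [z]; rewrite !in_setU orbACA => /orP[h|h].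
    apply: (connect_mono (subsetUl F1 F2)); apply: c1; first by exists z.
    by exists d2; rewrite d1F.
  apply: (connect_mono (subsetUr F1 F2)); apply: c2; first by exists z.
  by exists d2; rewrite d2F.
move=> x y hx hy; rewrite -/(connect (Frel (F1 :|: F2)) x y).
apply: (connect_trans (key x hx)); rewrite Frel_sym; exact: key.
Qed.

Lemma Z_in_sum (S : {set T * T}) k d : k \in S -> d \in Zk k -> d \in fc_sum tr S :&: tree_edges tr.
Proof.
move=> kS dZ; rewrite in_setI in_set (Zk_tree dZ) andbT.
by apply/bigcupP; exists k => //; rewrite fc_edgesE dZ.
Qed.

Lemma subtree_union (S1 S2 : {set T * T}) k1 k2 d : subtree_collection e tr rt S1 ->
  subtree_collection e tr rt S2 -> k1 \in S1 -> k2 \in S2 ->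
  d \in Zk k1 -> d \in Zk k2 -> subtree_collection e tr rt (S1 :|: S2).
Proof.
move=> [s1 c1] [s2 c2] k1S k2S d1 d2; split; first by rewrite subUset s1 s2.
rewrite /fc_sum bigcup_setU setIUl.
exact: (ec_union c1 c2 (Z_in_sum k1S d1) (Z_in_sum k2S d2)).
Qed.

Lemma fund_eq (S1 S2 : {set T * T}) k1 k2 d : fundamental_collection e tr rt S1 ->
  fundamental_collection e tr rt S2 -> k1 \in S1 -> k2 \in S2 ->
  d \in Zk k1 -> d \in Zk k2 -> S1 = S2.
Proof.
move=> [h1 m1] [h2 m2] k1S k2S d1 d2.
have U := subtree_union h1 h2 k1S k2S d1 d2.
by rewrite -(m1 _ U (subsetUl _ _)) (m2 _ U (subsetUr _ _)).
Qed.

Lemma fund_exists k : k \in keys -> exists2 S, fundamental_collection e tr rt S & k \in S.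
Proof.
move=> kK.
pose Pb := fun S : {set T * T} => `[< subtree_collection e tr rt S >] && (k \in S).
have P0 : Pb [set k].
  rewrite /Pb set11 andbT; apply/asboolP; split; first by rewrite sub1set.
  exact: ec_single.
case: (@arg_maxnP _ [set k] Pb (fun S : {set T * T} => #|S|) P0) => S /andP[/asboolP sS kS] maxS.
exists S => //; split => // S' sS' SS'.
apply/eqP; rewrite eq_sym eqEcard SS' /=; apply: maxS.
by rewrite /Pb (subsetP SS' _ kS) andbT; apply/asboolP.
Qed.


Lemma Zk_uniq k : uniq (Zk k).
Proof. by apply: zip_uniql; case/and3P: (tpathP trC k.1 k.2). Qed.

Lemma dep_good S : fundamental_collection e tr rt S -> collection_DEP tr S ->
  exists ks, [set k in ks] = S /\ goodL Zk (rt, rt) ks.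
Proof.
move=> [[sK _] _] [ks [uks eSk hks]]; exists ks; split => // i iks.
have kK : nth (rt, rt) ks i \in keys.
  by apply: (subsetP sK); rewrite -eSk in_set mem_nth.
case: i iks kK => [|i] iks kK.
  by case: (Zk_nonempty kK) => d dZ; exists d.
set k := nth (rt, rt) ks i.+1 in kK *.
have E : ks = take i.+1 ks ++ k :: drop i.+2 ks.
  by rewrite -(drop_nth (rt, rt) iks) cat_take_drop.
have pre0 : take i.+1 ks != [::] by rewrite -size_eq0 size_takel //; exact: ltnW.
have := hks _ _ _ E pre0.
set U := \bigcup_(k' <- _) _; set A := _ :\: _ => hA.
have : ~~ (A \subset [set (k.2, k.1)]).
  by apply: contraL hA => /subset_leq_card; rewrite cards1 -leqNgt.
case/subsetPn => d; rewrite in_set1 in_setD fc_edgesE => /andP[dU dk] dne.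
exists d; first by move: dk; rewrite (negbTE dne) orbF.
move=> j ji; apply: contra dU => dj.
rewrite /U bigcup_seq; apply/bigcupP; exists (nth (rt, rt) ks j).
  rewrite -(nth_take (rt, rt) ji) mem_nth // size_takel //; exact: ltnW.
by rewrite fc_edgesE dj.
Qed.

Lemma build (cs : seq {set T * T}) : uniq cs ->
  (forall S, S \in cs -> fundamental_collection e tr rt S) ->
  (forall S, fundamental_collection e tr rt S -> collection_DEP tr S) ->
  exists L, [/\ goodL Zk (rt, rt) L,
    forall k, k \in L -> exists2 S, S \in cs & k \in S &
    forall S k, S \in cs -> k \in S -> k \in L].
Proof.
move=> + + hD; elim: cs => [|S cs IH] /=.
  by move=> _ _; exists [::]; split.
case/andP=> Scs ucs hf.
have sub : forall S', S' \in cs -> S' \in S :: cs by move=> S' h; rewrite inE h orbT.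
have [L [gL L1 L2]] := IH ucs (fun S' h => hf S' (sub S' h)).
have fS := hf S (mem_head _ _).
have [ks [eSk gks]] := dep_good fS (hD _ fS).
exists (L ++ ks); split.
- apply: goodL_cat => // k1 k2 d k1L k2ks dZ2; apply/negP => dZ1.
  case: (L1 _ k1L) => S' S'cs k1S'.
  have k2S : k2 \in S by rewrite -eSk in_set.
  have E := fund_eq (hf S' (sub S' S'cs)) fS k1S' k2S dZ1 dZ2.
  by move: Scs; rewrite -E S'cs.
- move=> k; rewrite mem_cat => /orP[/L1 [S' h1 h2]|kks].
    by exists S' => //; rewrite inE h1 orbT.
  by exists S; rewrite ?mem_head // -eSk in_set.
move=> S' k; rewrite inE => /orP[/eqP -> kS|S'cs kS']; rewrite mem_cat.
  by rewrite -eSk in_set in kS; rewrite kS orbT.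
by rewrite (L2 _ _ S'cs kS').
Qed.

Local Notation D := (dep trC rt).

Lemma depne x y : e x y -> D x != D y.
Proof.
move=> exy; have xy : x != y by apply: contraTneq exy => ->; rewrite eI.
case: (nT exy) => h.
  by rewrite neq_ltn (tree_le_dep trS trA trC h xy).
by rewrite neq_ltn (tree_le_dep trS trA trC h _) ?orbT // eq_sym.
Qed.

Lemma key_antisym x y : (x, y) \in keys -> (y, x) \in keys -> False.
Proof.
case/keyP=> /= exy _ h1 /keyP [/= _ _ h2].
have xy : x != y by apply: contraTneq exy => ->; rewrite eI.
have := tree_le_dep trS trA trC h1 xy; have := tree_le_dep trS trA trC h2 _.
rewrite eq_sym => /(_ xy) h h'; by move: (ltn_trans h h'); rewrite ltnn.
Qed.

Local Open Scope ring_scope.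
Lemma expi_norm (R : realType) (c : R) : `|expi c| = 1 :> R[i].
Proof.
by rewrite normc_def /expi /= cos2Dsin2 sqrtr1.
Qed.

Lemma main_gnrp (R : realType) : graph_DEP e tr rt -> graph_GNRP R e tr rt.
Proof.
move=> hDEP r _.
pose cs := enum [set S | `[< fundamental_collection e tr rt S >]].
have [L [gL _ csL]] : exists L, [/\ goodL Zk (rt, rt) L,
    forall k, k \in L -> exists2 S, S \in cs & k \in S &
    forall S k, S \in cs -> k \in S -> k \in L].
  apply: build; first exact: enum_uniq.
    by move=> S; rewrite mem_enum in_set => /asboolP.
  exact: hDEP.
have kL : forall k, k \in keys -> k \in L.
  move=> k /fund_exists [S fS kS]; apply: (csL S) => //.
  by rewrite mem_enum in_set; apply/asboolP.
pose z := fun k : T * T => expi (r k).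
have zn : forall k, `|z k| = 1 by move=> k; exact: expi_norm.
have [g [h [gU hU gh]]] := greedy Zk_uniq gL zn.
pose phi := fun x y =>
  if tr x y then (if (D x < D y)%N then g (x, y) else (g (y, x))^-1)
  else if (y, x) \in keys then h (y, x)
  else if (x, y) \in keys then (h (x, y))^-1 else 1.
have phiU : forall x y, e x y -> Ugood (phi x y).
  move=> x y exy; rewrite /phi; case: ifP => _.
    by case: ifP => _; [apply: gU | apply: Ugood_inv].
  case: ifP => _; first exact: hU.
  by case: ifP => _; [apply: Ugood_inv | apply: Ugood1].
exists phi; split.
- move=> x y exy; split; first by case: (phiU x y exy).
  rewrite /phi (trS y x); case: ifP => trxy.
    have := depne exy; case: ltngtP => //= _ _.
    by rewrite invrK.
  case kyx: ((y, x) \in keys); case kxy: ((x, y) \in keys) => //.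
  + by case: (key_antisym kxy kyx).
  + by rewrite invrK.
  + by rewrite invr1.
- move=> k kK q hq.
  have Eq := tp_uniq trS trA hq (tpathP trC k.1 k.2); subst q.
  case/keyP: (kK) => _ ntr kle.
  rewrite (eq_big_seq (fun ab => g ab)); last first.
    move=> ab abZ; rewrite /phi (Zk_tree abZ).
    case: ab abZ => a b abZ /=.
    by rewrite (tree_le_down trS trA trC kle (tpathP trC k.1 k.2) abZ) ltnSn.
  rewrite /phi trS (negbTE ntr) -surjective_pairing kK.
  exact: (gh k (kL k kK)).
- by move=> x y exy; case: (phiU x y exy).
Qed.

End Main.

Theorem theorem4p2 (R : realType) (T : finType) (e tr : rel T) (rt : T) :
  simple_graph e -> graph_connected e ->
  spanning_tree e tr -> normal_tree e tr rt ->
  graph_DEP e tr rt -> graph_GNRP R e tr rt.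
Proof.
move=> [eS eI] _ [trS trE trC trA] nT.
exact: (main_gnrp eI trS trC trA nT).
Qed.
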